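(* Let $p$ be an odd prime. If $M$ is a locally finitely generated $A$-module and $x\in M$ satisfies $\Phi_nx=0$ for some $n\ge0$, then $A_nx=0$.
   Context: $A$ is the ring of degree zero stable operations in $p$-local complex $K$-theory. Fix $q$ primitive mod $p^2$, $\Psi^q\in A$ the Adams operation, $q_i=q^{(-1)^i\lfloor i/2\rfloor}$, $\Theta_n(X)=\prod_{i=1}^n(X-q_i)$, $\Phi_n=\Theta_n(\Psi^q)$; every element of $A$ is uniquely a convergent sum $\sum_{n\ge0}a_n\Phi_n$ with $a_n\in\mathbb{Z}_{(p)}$, and $A_m=\{\sum_{n\ge m}a_n\Phi_n\}$. An $A$-module $M$ is locally finitely generated if $Ax$ is finitely generated over $\mathbb{Z}_{(p)}$ for every $x\in M$. *)

(* Defs.v *)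
From HB Require Import structures.
From mathcomp Require Import all_boot all_order all_algebra.
Set Implicit Arguments. Unset Strict Implicit. Unset Printing Implicit Defensive.
Import Order.TTheory GRing.Theory Num.Theory.
Local Open Scope ring_scope.

Definition Zloc (p : nat) (r : rat) : bool := ~~ (p%:Z %| denq r)%Z.

Definition primitive_mod_p2 (p : nat) (q : int) : Prop :=
  coprimez q p%:Z /\
  forall k : nat, (0 < k)%N -> (k < p * p.-1)%N ->
    ~~ ((p ^ 2)%:Z %| q ^+ k - 1)%Z.

Definition qi (q : int) (i : nat) : rat :=
  (q%:~R : rat) ^ ((-1) ^+ i * (i./2)%:Z).

Definition Theta (q : int) (n : nat) : {poly rat} :=
  \prod_(1 <= i < n.+1) ('X - (qi q i)%:P).

(* Expansion coefficients: tcoef q i f k is the coefficient of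
   prod_{j=i+1}^{i+k} (X - q_j) in the expansion of f in that basis. *)
Fixpoint tcoef (q : int) (i : nat) (f : {poly rat}) (k : nat) : rat :=
  match k with
  | 0 => f.[qi q i.+1]
  | k'.+1 => tcoef q i.+1 (f %/ ('X - (qi q i.+1)%:P)) k'
  end.

(* Elements of A are represented by their coefficient sequences
   (a_n)_n, standing for sum_n a_n Phi_n; they are the sequences with
   values in Z_(p). *)
Definition Aseq := nat -> rat.

Definition inA (p : nat) (a : Aseq) : Prop := forall n, Zloc p (a n).

Definition PhiA (n : nat) : Aseq := fun k => (k == n)%:R.

Definition constA (c : rat) : Aseq := fun k => if k == 0%N then c else 0.

Definition addA (a b : Aseq) : Aseq := fun k => a k + b k.

(* Product: (sum a_n Phi_n)(sum b_m Phi_m) = sum_k c_k Phi_k where only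
   n, m <= k contribute to c_k. *)
Definition mulA (q : int) (a b : Aseq) : Aseq := fun k =>
  \sum_(n < k.+1) \sum_(m < k.+1)
     a n * b m * tcoef q 0 (Theta q n * Theta q m) k.

Definition inAfilt (p : nat) (m : nat) (a : Aseq) : Prop :=
  inA p a /\ forall k, (k < m)%N -> a k = 0.

Definition is_Amodule (p : nat) (q : int) (M : zmodType) (act : Aseq -> M -> M) : Prop :=
  [/\ forall a, inA p a -> forall x y, act a (x + y) = act a x + act a y,
      forall a b, inA p a -> inA p b -> forall x, act (addA a b) x = act a x + act b x,
      forall a b, inA p a -> inA p b -> forall x, act (mulA q a b) x = act a (act b x)
    & forall x, act (constA 1) x = x].

Definition locally_fg (p : nat) (M : zmodType) (act : Aseq -> M -> M) : Prop :=
  forall x : M, exists gens : seq M,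
    (forall g, g \in gens -> exists2 a, inA p a & g = act a x) /\
    (forall a, inA p a -> exists2 c : nat -> rat, (forall i, Zloc p (c i)) &
        act a x = \sum_(i < size gens) act (constA (c i)) (nth 0 gens i)).

(* Main.v *)
Require Import Defs.
From HB Require Import structures.
From mathcomp Require Import all_boot all_order all_algebra.
From mathcomp Require Import zify ring lra.
From Stdlib Require Import Classical FunctionalExtensionality.
Set Implicit Arguments. Unset Strict Implicit. Unset Printing Implicit Defensive.
Import Order.TTheory GRing.Theory Num.Theory.
Local Open Scope ring_scope.


Section Zl.
Variable p : nat.
Hypothesis hp : prime p.

Lemma ZlocP r : Zloc p r <-> exists (a : int) (b : nat), ~~ (p %| b)%N /\ r = a%:~R / b%:R.
Proof.
split.
- move=> h; exists (numq r), `|denq r|%N; split.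
    by move: h; rewrite /Zloc dvdzE.
  by rewrite -[in LHS](divq_num_den r) -[in LHS]absz_denq.
- move=> [a [b [hb ->]]].
  have b0 : b != 0%N by apply: contraNneq hb => ->; rewrite dvdn0.
  have -> : a%:~R / b%:R = fracq (a, b%:Z) :> rat by rewrite fracqE.
  rewrite /Zloc den_fracq /= (_ : b%:Z != 0) // dvdzE /=.
  apply: contra hb => h; apply: dvdn_trans h _; apply: dvdn_div.
  exact: dvdn_gcdr.
Qed.

Lemma Zloc_int (z : int) : Zloc p z%:~R.
Proof. apply/ZlocP; exists z, 1%N; split; last by rewrite divr1.
by rewrite dvdn1; apply/negP => /eqP h; move: (hp); rewrite h. Qed.

Lemma Zloc_nat (n : nat) : Zloc p n%:R.
Proof. by have := Zloc_int n; rewrite pmulrn. Qed.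

Lemma Zloc_add r s : Zloc p r -> Zloc p s -> Zloc p (r + s).
Proof.
move=> /ZlocP [a [b [hb ->]]] /ZlocP [c [d [hd ->]]]; apply/ZlocP.
exists (a * d%:Z + c * b%:Z), (b * d)%N; split.
  by rewrite Euclid_dvdM // negb_or hb hd.
have b0 : (b%:R : rat) != 0 by rewrite pnatr_eq0; apply: contraNneq hb => ->; rewrite dvdn0.
have d0 : (d%:R : rat) != 0 by rewrite pnatr_eq0; apply: contraNneq hd => ->; rewrite dvdn0.
rewrite natrM rmorphD !rmorphM /= !pmulrn -!intrM; field; exact/andP.
Qed.

Lemma Zloc_mul r s : Zloc p r -> Zloc p s -> Zloc p (r * s).
Proof.
move=> /ZlocP [a [b [hb ->]]] /ZlocP [c [d [hd ->]]]; apply/ZlocP.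
exists (a * c), (b * d)%N; split.
  by rewrite Euclid_dvdM // negb_or hb hd.
by rewrite natrM rmorphM /= invfM; ring.
Qed.

Lemma Zloc_opp r : Zloc p r -> Zloc p (- r).
Proof. by move=> h; rewrite -mulN1r; apply: Zloc_mul => //; exact: (Zloc_int (-1)). Qed.

Lemma Zloc_sub r s : Zloc p r -> Zloc p s -> Zloc p (r - s).
Proof. by move=> h1 h2; apply: Zloc_add => //; apply: Zloc_opp. Qed.

Lemma Zloc0 : Zloc p 0. Proof. exact: (Zloc_nat 0). Qed.
Lemma Zloc1 : Zloc p 1. Proof. exact: (Zloc_nat 1). Qed.

Lemma Zloc_exp r n : Zloc p r -> Zloc p (r ^+ n).
Proof. move=> h; elim: n => [|n IH]; first exact: Zloc1. by rewrite exprS; apply: Zloc_mul. Qed.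

Lemma Zloc_sum (I : Type) (s : seq I) (P : pred I) (F : I -> rat) :
  (forall i, P i -> Zloc p (F i)) -> Zloc p (\sum_(i <- s | P i) F i).
Proof. move=> h; elim/big_ind: _ => //; [exact: Zloc0 | exact: Zloc_add]. Qed.

Lemma Zloc_prod (I : Type) (s : seq I) (P : pred I) (F : I -> rat) :
  (forall i, P i -> Zloc p (F i)) -> Zloc p (\prod_(i <- s | P i) F i).
Proof. move=> h; elim/big_ind: _ => //; [exact: Zloc1 | exact: Zloc_mul]. Qed.

Lemma Zloc_inv_int (z : int) : ~~ (p %| `|z|)%N -> Zloc p (z%:~R)^-1.
Proof.
move=> h; have z0 : z != 0 by apply: contraNneq h => ->; rewrite dvdn0.
by rewrite /Zloc denqVz // dvdzE.
Qed.

End Zl.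


Section TC.
Variable q : int.

Definition Pp (i m : nat) : {poly rat} :=
  \prod_(i.+1 <= l < (i + m).+1) ('X - (qi q l)%:P).

Lemma tcoef0 i k : tcoef q i 0 k = 0.
Proof. elim: k i => [|k IH] i /=; first by rewrite horner0. by rewrite div0p IH. Qed.

Lemma tcoefD i f g k : tcoef q i (f + g) k = tcoef q i f k + tcoef q i g k.
Proof. elim: k i f g => [|k IH] i f g /=; first by rewrite hornerD. by rewrite divpD IH. Qed.

Lemma tcoefZ i c f k : tcoef q i (c *: f) k = c * tcoef q i f k.
Proof. elim: k i f => [|k IH] i f /=; first by rewrite hornerZ. by rewrite divpZl IH. Qed.

Lemma XsubC_neq0 (c : rat) : ('X - c%:P) != 0.
Proof. by rewrite polyXsubC_eq0 // -size_poly_eq0 size_XsubC. Qed.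

Lemma PpS i m : Pp i m.+1 = ('X - (qi q i.+1)%:P) * Pp i.+1 m.
Proof. rewrite /Pp big_ltn; last by rewrite ltnS addnS ltnS leq_addr.
by rewrite addnS addSn. Qed.

Lemma Pp0 i : Pp i 0 = 1.
Proof. by rewrite /Pp addn0 big_geq. Qed.

Lemma tcoefP i m k : tcoef q i (Pp i m) k = (m == k)%:R.
Proof.
elim: k i m => [|k IH] i [|m] /=.
- by rewrite Pp0 hornerC.
- by rewrite PpS hornerM hornerXsubC subrr mul0r.
- rewrite Pp0 divp_small ?tcoef0 // size_poly1 size_XsubC //.
- by rewrite PpS mulKp ?XsubC_neq0 // IH.
Qed.

Lemma Theta_Pp n : Theta q n = Pp 0 n.
Proof. by rewrite /Theta /Pp add0n. Qed.

Lemma tcoefTheta n k : tcoef q 0 (Theta q n) k = (n == k)%:R.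
Proof. by rewrite Theta_Pp tcoefP. Qed.

Lemma Theta0 : Theta q 0 = 1.
Proof. by rewrite Theta_Pp Pp0. Qed.

Lemma ThetaS n : Theta q n.+1 = Theta q n * ('X - (qi q n.+1)%:P).
Proof. by rewrite /Theta big_nat_recr. Qed.

Lemma Theta1 : Theta q 1 = 'X - (qi q 1)%:P.
Proof. by rewrite ThetaS Theta0 mul1r. Qed.

Lemma ThetaM1 n : Theta q n * Theta q 1 =
  Theta q n.+1 + (qi q n.+1 - qi q 1) *: Theta q n.
Proof.
rewrite Theta1 (ThetaS n) -mul_polyC.
have -> : 'X - (qi q 1)%:P = ('X - (qi q n.+1)%:P) + (qi q n.+1 - qi q 1)%:P.
  by rewrite polyCB; ring.
rewrite mulrDr; congr (_ + _); exact: mulrC.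
Qed.

End TC.


Section MA.
Arguments tcoef : simpl never.
Variable q : int.

Lemma sum_delta (F : nat -> rat) k :
  \sum_(m < k.+1) F m * ((m : nat) == k)%:R = F k.
Proof.
rewrite big_ord_recr /= eqxx mulr1 big1 ?add0r // => i _.
by rewrite (ltn_eqF (ltn_ord i)) mulr0.
Qed.

Lemma mulA_constl c b k : Defs.mulA q (constA c) b k = c * b k.
Proof.
rewrite /Defs.mulA big_ord_recl /= [X in _ + X]big1 ?addr0; last first.
  by move=> i _; rewrite /constA /= big1 // => j _; rewrite !mul0r.
rewrite /constA /= -[RHS](sum_delta (fun m => c * b m)) /=.
by apply: eq_bigr => m _; rewrite Theta0 mul1r tcoefTheta.
Qed.

Definition PsiA (l : rat) : Aseq :=
  fun m => if m == 0%N then qi q 1 - l else if m == 1%N then 1 else 0.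

Definition shiftR (a : Aseq) (l : rat) : Aseq := fun k =>
  (if k is k'.+1 then a k' else 0) + (qi q k.+1 - l) * a k.

Lemma mulA_Psi a l k : Defs.mulA q a (PsiA l) k = shiftR a l k.
Proof.
rewrite /Defs.mulA /shiftR; case: k => [|k].
  rewrite !big_ord1 /= Theta0 mulr1.
  by rewrite -(Theta0 q) tcoefTheta /PsiA /=; ring.
have inner : forall n : nat,
  \sum_(m < k.+2) a n * PsiA l m * tcoef q 0 (Theta q n * Theta q m) k.+1 =
  a n * ((n.+1 == k.+1)%:R + (qi q n.+1 - l) * (n == k.+1)%:R).
  move=> n; rewrite big_ord_recl big_ord_recl /= big1; last first.
    by move=> i _; rewrite /PsiA /= mulr0 mul0r.
  rewrite Theta0 mulr1 ThetaM1 tcoefD tcoefZ !tcoefTheta /PsiA /= addr0.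
  ring.
rewrite (eq_bigr (fun n : 'I_k.+2 => a n * (((n : nat).+1 == k.+1)%:R + (qi q n.+1 - l) * ((n : nat) == k.+1)%:R))); last by move=> n _; exact: inner.
rewrite (eq_bigr (fun n : 'I_k.+2 => a n * ((n : nat).+1 == k.+1)%:R + (a n * (qi q n.+1 - l)) * ((n : nat) == k.+1)%:R)); last by move=> n _; ring.
rewrite big_split /= (sum_delta (fun n => a n * (qi q n.+1 - l)) k.+1).
rewrite big_ord_recr /= (_ : (k.+2 == k.+1) = false); last by apply/eqP; lia.
rewrite mulr0 addr0.
rewrite (eq_bigr (fun n : 'I_k.+1 => a n * ((n : nat) == k)%:R)); last by move=> n _; rewrite eqSS.
rewrite sum_delta; ring.
Qed.

End MA.


Section PA.
Variables (p : nat) (q : int).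
Hypotheses (hp : prime p) (hodd : odd p) (hq : coprimez q p).

Lemma p_gt1 : (1 < p)%N. Proof. exact: prime_gt1. Qed.

Lemma q_ndvd k : ~~ (p %| `|q ^+ k|)%N.
Proof.
have : coprimez (q ^+ k) p by exact: coprimezXl.
by rewrite coprimezE /= coprime_sym prime_coprime.
Qed.

Lemma Zloc_qz (e : int) : Zloc p ((q%:~R : rat) ^ e).
Proof.
case: e => n.
  by rewrite -exprnP; apply: Zloc_exp => //; exact: Zloc_int.
rewrite NegzE -exprnN -rmorphXn /=; apply: Zloc_inv_int => //; exact: q_ndvd.
Qed.

Lemma fermat1 : (`|q| ^ p.-1 == 1 %[mod p])%N.
Proof.
have hc : coprime `|q| p by move: hq; rewrite coprimezE.
have a0 : (0 < `|q|)%N.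
  rewrite lt0n; apply/negP => /eqP h0; move: hc; rewrite h0 /coprime gcd0n => /eqP h1.
  by have := p_gt1; rewrite h1.
have hf := fermat_little `|q| hp.
have e1 : (1 <= `|q| ^ p.-1)%N by rewrite expn_gt0 a0.
rewrite eqn_mod_dvd //.
have : (p %| `|q| * (`|q| ^ p.-1 - 1))%N.
  rewrite mulnBr muln1 -expnS prednK ?prime_gt0 //.
  have le : (`|q| ^ 1 <= `|q| ^ p)%N by apply: leq_pexp2l => //; exact: prime_gt0.
  rewrite expn1 in le.
  by rewrite -eqn_mod_dvd // hf.
by rewrite Gauss_dvdr // coprime_sym.
Qed.

Lemma even_pm1 : ~~ odd p.-1.
Proof. by move: hodd; have := p_gt1; case: p => // n _; rewrite /= negbK. Qed.

Lemma qpow_even (N : nat) : ~~ odd N -> q ^+ N = (`|q| ^ N)%N%:Z.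
Proof.
move=> he; rewrite -abszX gez0_abs //.
by rewrite -(odd_double_half N) (negbTE he) add0n -mul2n exprM exprn_ge0 // sqr_ge0.
Qed.

Lemma powq_sub1 (s : nat) : Zloc p (((q%:~R : rat) ^+ (p.-1 * s) - 1) / p%:R).
Proof.
have he : ~~ odd (p.-1 * s) by rewrite oddM negb_and even_pm1.
rewrite -rmorphXn /= qpow_even //.
set N := (`|q| ^ (p.-1 * s))%N.
have hN : (N == 1 %[mod p])%N.
  by rewrite /N expnM -modnXm (eqP fermat1) modnXm exp1n.
have c0 : (1 <= N)%N.
  rewrite /N expn_gt0; apply/orP; left; rewrite lt0n.
  apply/negP => /eqP h0; move: hq; rewrite coprimezE h0 /coprime gcd0n => /eqP h1.
  by have := p_gt1; move: h1 => /= ->.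
move: hN; rewrite eqn_mod_dvd // => /dvdnP [m hm].
have -> : ((N%:Z)%:~R : rat) - 1 = (N - 1)%N%:R by rewrite natrB // pmulrn.
rewrite hm natrM mulfK ?pnatr_eq0 -?lt0n ?prime_gt0 //.
exact: Zloc_nat.
Qed.


Lemma q_neq0 : (q%:~R : rat) != 0.
Proof.
rewrite intr_eq0; apply/negP => /eqP h0; move: hq; rewrite h0 coprimezE /coprime gcd0n /= => /eqP h1.
by have := p_gt1; rewrite h1.
Qed.

Lemma powq_sub1z (t : int) : Zloc p (((q%:~R : rat) ^ (t * p.-1%:Z) - 1) / p%:R).
Proof.
case: t => s.
  by rewrite -PoszM mulnC -exprnP; exact: powq_sub1.
set d := (Negz s * p.-1%:Z).
have hd : - d = (p.-1 * s.+1)%N%:Z by rewrite /d NegzE mulNr opprK -PoszM mulnC.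
have -> : (q%:~R : rat) ^ d - 1 = - ((q%:~R ^ (- d) - 1) * q%:~R ^ d).
  rewrite mulrBl mul1r -expfzDr ?q_neq0 // addNr expr0z; ring.
rewrite mulNr mulrAC; apply: Zloc_opp => //; apply: Zloc_mul => //; last exact: Zloc_qz.
by rewrite hd -exprnP; exact: powq_sub1.
Qed.

Lemma qdiff (e e' : int) : (p.-1%:Z %| e - e')%Z ->
  Zloc p (((q%:~R : rat) ^ e - q%:~R ^ e') / p%:R).
Proof.
move=> hd.
have he : e = e' + ((e - e') %/ p.-1%:Z)%Z * p.-1%:Z by rewrite divzK // addrC subrK.
rewrite {1}he expfzDr ?q_neq0 // -{2}(mulr1 (q%:~R ^ e')) -mulrBr -mulrA.
apply: Zloc_mul => //; [exact: Zloc_qz | exact: powq_sub1z].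
Qed.

Definition ex (l : nat) : int := (-1) ^+ l * (l./2)%:Z.

Lemma qiE l : qi q l = (q%:~R : rat) ^ (ex l).
Proof. by []. Qed.

Lemma ex_even s : ex (s.*2) = s%:Z.
Proof. by rewrite /ex -signr_odd odd_double expr0 mul1r doubleK. Qed.

Lemma Zloc_qi l : Zloc p (qi q l).
Proof. exact: Zloc_qz. Qed.

Lemma block_exists k (e : int) : exists2 l, (k < l <= k + 2 * p.-1)%N & (p.-1%:Z %| ex l - e)%Z.
Proof.
have hp1 : (0 < p.-1)%N by have := p_gt1; case: p => [|[|]].
have hp1z : (0 < p.-1%:Z) by [].
set s0 := (k.+2)./2.
have h2 := odd_double_half (k.+2); rewrite -/s0 -mul2n in h2.
have ho : (odd k.+2 <= 1)%N by apply: leq_b1.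
set rz := ((e - s0%:Z) %% p.-1%:Z)%Z.
have r0 : 0 <= rz by apply: modz_ge0; rewrite -lt0n.
have r1 : rz < p.-1%:Z by apply: ltz_pmod.
set r := `|rz|%N.
have hr : r%:Z = rz by rewrite /r gez0_abs.
have rlt : (r < p.-1)%N by rewrite -ltz_nat hr.
exists ((s0 + r).*2)%N.
  rewrite -mul2n; apply/andP; split; lia.
rewrite ex_even PoszD hr.
have := divz_eq (e - s0%:Z) p.-1%:Z; rewrite -/rz => he.
have -> : s0%:Z + rz - e = - (((e - s0%:Z) %/ p.-1%:Z)%Z * p.-1%:Z).
  have -> : s0%:Z + rz - e = - ((e - s0%:Z) - rz) by ring.
  by rewrite {1}he addrK.
by rewrite -mulNr dvdz_mull // dvdzz.
Qed.

Definition prodQ (lam : rat) (k L : nat) : rat :=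
  \prod_(k.+1 <= l < (k + L).+1) (qi q l - lam).

Lemma prodQ_split lam k A B : prodQ lam k (A + B)%N = prodQ lam k A * prodQ lam (k + A)%N B.
Proof.
rewrite /prodQ (big_cat_nat _ (n := (k + A).+1)).
- by rewrite addnA.
- by rewrite ltnS leq_addr.
- by rewrite ltnS leq_add2l leq_addr.
Qed.

Lemma Zloc_prodQ lam k L : Zloc p lam -> Zloc p (prodQ lam k L).
Proof. move=> hl; apply: Zloc_prod => // l _; apply: Zloc_sub => //; exact: Zloc_qi. Qed.

Lemma block n k : Zloc p (prodQ (qi q n) k (2 * p.-1)%N / p%:R).
Proof.
have [l /andP [kl lK] hd] := block_exists k (ex n).
rewrite /prodQ (big_cat_nat _ (n := l)) /=; [|lia|lia].
rewrite [\prod_(l <= i < _) _]big_ltn; last lia.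
set A := \prod_(k.+1 <= i < l) _.
set B := \prod_(l.+1 <= i < _) _.
have -> : A * ((qi q l - qi q n) * B) / p%:R = ((qi q l - qi q n) / p%:R) * (A * B) by ring.
apply: Zloc_mul => //; first exact: qdiff.
apply: Zloc_mul => //; (apply: Zloc_prod => // i _; apply: Zloc_sub => //; exact: Zloc_qi).
Qed.

Lemma prodj n j k : Zloc p (prodQ (qi q n) k (2 * p.-1 * j)%N / p%:R ^+ j).
Proof.
elim: j k => [|j IH] k.
  by rewrite muln0 /prodQ addn0 big_geq // expr0 divr1; exact: Zloc1.
rewrite mulnS prodQ_split exprS.
have -> : prodQ (qi q n) k (2 * p.-1)%N * prodQ (qi q n) (k + 2 * p.-1)%N (2 * p.-1 * j)%N /
   (p%:R * p%:R ^+ j) = (prodQ (qi q n) k (2 * p.-1)%N / p%:R) *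
   (prodQ (qi q n) (k + 2 * p.-1)%N (2 * p.-1 * j)%N / p%:R ^+ j).
  by rewrite invfM; ring.
apply: Zloc_mul => //; first exact: block.
Qed.

End PA.


Section CF.
Variables (p : nat) (q : int).
Hypotheses (hp : prime p) (hodd : odd p) (hq : coprimez q p).
Variables (b : Aseq) (lam : rat).

Fixpoint Cf (L k : nat) : rat :=
  if L is L'.+1 then b k - (qi q k.+1 - lam) * Cf L' k.+1 else 0.

Lemma prodQ1 k : prodQ q lam k 1 = qi q k.+1 - lam.
Proof. by rewrite /prodQ addn1 big_nat1. Qed.

Lemma D_formula L k : Cf L.+1 k - Cf L k = (-1) ^+ L * b (k + L)%N * prodQ q lam k L.
Proof.
elim: L k => [|L IH] k.
  rewrite /= /prodQ !addn0 big_geq //.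
  rewrite expr0; ring.
have -> : Cf L.+2 k - Cf L.+1 k = - (qi q k.+1 - lam) * (Cf L.+1 k.+1 - Cf L k.+1).
  rewrite /=; ring.
have -> : prodQ q lam k L.+1 = (qi q k.+1 - lam) * prodQ q lam k.+1 L.
  by rewrite -(add1n L) prodQ_split prodQ1 addn1.
rewrite IH exprS addSnnS; ring.
Qed.

Lemma Zloc_Cf L k : (forall m, Zloc p (b m)) -> Zloc p lam -> Zloc p (Cf L k).
Proof.
move=> hb hl; elim: L k => [|L IH] k /=; first exact: Zloc0.
apply: Zloc_sub => //; apply: Zloc_mul => //; apply: Zloc_sub => //; exact: Zloc_qi.
Qed.

Lemma Cf_zero n L k : lam = qi q n -> (forall m, (m < n)%N -> b m = 0) ->
  (k < n)%N -> Cf L k = 0.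
Proof.
move=> hl hb; elim: L k => [|L IH] k hk //=.
rewrite hb // sub0r.
have [hk1|hk1] := ltnP k.+1 n; first by rewrite IH // mulr0 oppr0.
have -> : k.+1 = n by apply/eqP; rewrite eqn_leq hk1 hk.
by rewrite hl subrr mul0r oppr0.
Qed.

End CF.

Section AP.
Variables (p : nat) (q : int).
Hypotheses (hp : prime p) (hodd : odd p) (hq : coprimez q p).

Lemma approx n j (b : Aseq) : (forall m, Zloc p (b m)) -> (forall m, (m < n.+1)%N -> b m = 0) ->
  exists c d, [/\ inAfilt p n c, inA p d &
    forall k, b k = shiftR q c (qi q n.+1) k + p%:R ^+ j * d k].
Proof.
move=> hb hb0.
set lam := qi q n.+1.
set L := (2 * p.-1 * j)%N.
exists (fun k => Cf q b lam L k.+1).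
exists (fun k => (-1) ^+ L * b (k + L)%N * (prodQ q lam k L / p%:R ^+ j)).
split.
- split.
    move=> k; apply: Zloc_Cf => //; exact: Zloc_qi.
  move=> k hk; apply: (Cf_zero (n := n.+1)) => //.
- move=> k; apply: Zloc_mul => //; last exact: prodj.
  apply: Zloc_mul => //; apply: Zloc_exp => //; exact: (Zloc_int hp (-1)).
- move=> k.
  have pj : (p%:R : rat) ^+ j != 0 by rewrite expf_neq0 // pnatr_eq0 -lt0n prime_gt0.
  have -> : p%:R ^+ j * ((-1) ^+ L * b (k + L)%N * (prodQ q lam k L / p%:R ^+ j)) =
     Cf q b lam L.+1 k - Cf q b lam L k.
    by rewrite D_formula mulrC -!mulrA mulVf // mulr1.
  rewrite /shiftR; case: k => [|k].
    rewrite [Cf q b lam L.+1 0]/= (@Cf_zero q b lam n.+1 L 0) //; ring.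
  rewrite [Cf q b lam L.+1 k.+1]/=; ring.
Qed.

End AP.


Section Val.
Variable p : nat.
Hypothesis hp : prime p.

Lemma pR_neq0 : (p%:R : rat) != 0.
Proof. by rewrite pnatr_eq0 -lt0n prime_gt0. Qed.

Lemma val_decomp t : Zloc p t -> t != 0 ->
  exists e w, [/\ Zloc p w, Zloc p w^-1 & t = p%:R ^+ e * w].
Proof.
move=> /ZlocP [a [b [hb ->]]] ht.
have a0 : a != 0 by apply: contraNneq ht => ->; rewrite mul0r.
have b0 : (b%:R : rat) != 0 by rewrite pnatr_eq0; apply: contraNneq hb => ->; rewrite dvdn0.
have apos : (0 < `|a|)%N by rewrite absz_gt0.
have [m hm ha] := pfactor_coprime hp apos.
set e := logn p `|a| in ha.
have hm' : ~~ (p %| m)%N by rewrite -prime_coprime.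
have m0 : m != 0%N by apply: contraNneq hm' => ->; rewrite dvdn0.
set z : int := sgz a * m%:Z.
have s1 : `|sgz a|%N = 1%N by move: a0; case: (sgzP a).
have hz : ~~ (p %| `|z|)%N by rewrite /z abszM s1 mul1n.
have z0 : z != 0 by rewrite /z mulf_neq0 ?sgz_eq0 //.
exists e, (z%:~R / b%:R); split.
- apply: Zloc_mul => //; [exact: Zloc_int | apply/ZlocP; exists 1, b; split => //; by rewrite mul1r].
- rewrite invfM invrK; apply: Zloc_mul => //; [exact: Zloc_inv_int | exact: Zloc_nat].
- rewrite {1}[a]intEsg ha /z.
  rewrite !intrM PoszM intrM -!pmulrn natrX; ring.
Qed.

Lemma not_Zloc_invp : ~~ Zloc p (p%:R)^-1.
Proof.
have -> : (p%:R : rat) = (p%:Z)%:~R by rewrite pmulrn.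
rewrite /Zloc negbK denqVz ?dvdzE //.
by rewrite -lt0n prime_gt0.
Qed.

Lemma infdiv t : Zloc p t -> (forall j, exists2 c, Zloc p c & t = p%:R ^+ j * c) -> t = 0.
Proof.
move=> ht hd; apply/eqP; apply/negP => /negP t0.
have [e [w [hw hw' tE]]] := val_decomp ht t0; subst t.
have [c hc he] := hd e.+1.
have hpe : (p%:R : rat) ^+ e != 0 by rewrite expf_neq0 // pR_neq0.
have hw0 : w != 0 by apply: contraNneq t0 => ->; rewrite mulr0.
have : (p%:R : rat)^-1 = c * w^-1.
  move: he; rewrite exprS -mulrA mulrCA => /(mulfI hpe) hw1.
  have c0 : c != 0 by apply: contraNneq hw0; rewrite hw1 => ->; rewrite mulr0.
  by rewrite hw1 invfM mulrCA mulfV // mulr1.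
move=> hi; have := not_Zloc_invp; rewrite hi; move/negP; apply.
exact: Zloc_mul.
Qed.

End Val.

Section Kr.
Variable p : nat.
Hypothesis hp : prime p.
Variables (M : zmodType) (s : rat -> M -> M).
Hypothesis sD : forall c, Zloc p c -> forall x y, s c (x + y) = s c x + s c y.
Hypothesis sDl : forall c c', Zloc p c -> Zloc p c' -> forall x, s (c + c') x = s c x + s c' x.
Hypothesis sM : forall c c', Zloc p c -> Zloc p c' -> forall x, s c (s c' x) = s (c * c') x.

Lemma s0x x : s 0 x = 0.
Proof.
have := sDl (Zloc0 hp) (Zloc0 hp) x; rewrite addr0 => h.
by apply: (@addrI _ (s 0 x)); rewrite addr0 -h.
Qed.

Lemma sB c c' x : Zloc p c -> Zloc p c' -> s (c - c') x = s c x - s c' x.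
Proof.
move=> hc hc'; apply/eqP; rewrite eq_sym subr_eq -sDl ?subrK //.
exact: Zloc_sub.
Qed.

Lemma s_sum c (r : nat) (F : 'I_r -> M) : Zloc p c -> s c (\sum_(i < r) F i) = \sum_(i < r) s c (F i).
Proof.
move=> hc; elim: r F => [|r IH] F.
  rewrite !big_ord0; have := sD hc 0 0; rewrite addr0 => h.
  by apply: (@addrI _ (s c 0)); rewrite addr0 -h.
by rewrite !big_ord_recr /= sD // IH.
Qed.

Lemma krull r : forall (g : nat -> M) y,
  (forall j, exists2 c : nat -> rat, (forall i, Zloc p (c i)) &
     y = \sum_(i < r) s (p%:R ^+ j * c i) (g i)) -> y = 0.
Proof.
elim: r => [|r IH] g y hy.
  by have [c _ ->] := hy 0%N; rewrite big_ord0.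
have Zp j : Zloc p (p%:R ^+ j) by apply: Zloc_exp => //; exact: Zloc_nat.
have [[t [ht t0 [u hu hS]]] | hB] := classic (exists t, [/\ Zloc p t, t != 0 &
   exists2 u : nat -> rat, (forall i, Zloc p (u i)) & s t (g 0%N) = \sum_(i < r) s (u i) (g i.+1)]).
- have [e [w [hw hw' tE]]] := val_decomp hp ht t0.
  have w0 : w != 0 by apply: contraNneq t0 => w0; rewrite tE w0 mulr0.
  have hpe : s (p%:R ^+ e) (g 0%N) = \sum_(i < r) s (w^-1 * u i) (g i.+1).
    have -> : p%:R ^+ e = w^-1 * t by rewrite tE mulrCA mulVf // mulr1.
    rewrite -sM // hS s_sum //; apply: eq_bigr => i _; rewrite sM //.
  apply: (IH (fun i => g i.+1)) => j.
  have [c hc hyc] := hy (j + e)%N.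
  exists (fun i => c 0%N * w^-1 * u i + p%:R ^+ e * c i.+1).
    move=> i; apply: Zloc_add => //; apply: Zloc_mul => //; apply: Zloc_mul => //.
  rewrite hyc big_ord_recl /=.
  have -> : s (p%:R ^+ (j + e) * c 0%N) (g 0%N) = s (p%:R ^+ j * c 0%N) (s (p%:R ^+ e) (g 0%N)).
    by rewrite sM ?exprD; [congr s; ring | apply: Zloc_mul | ].
  rewrite hpe s_sum; last by apply: Zloc_mul.
  rewrite -big_split /=; apply: eq_bigr => i _.
  rewrite sM; [|apply: Zloc_mul => // | apply: Zloc_mul => //].
  rewrite (_ : bump 0 i = i.+1) // -sDl.
  - congr s; rewrite exprD; ring.
  - by apply: Zloc_mul => //; apply: Zloc_mul.
  - by apply: Zloc_mul.
- have hT : forall t, Zloc p t -> (exists2 u : nat -> rat, (forall i, Zloc p (u i)) &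
      s t (g 0%N) = \sum_(i < r) s (u i) (g i.+1)) -> t = 0.
    move=> t ht hu; apply: NNPP => t0; apply: hB; exists t; split => //.
    by apply/eqP.
  have [c0 hc0 hy0] := hy 0%N.
  have hcj : forall j, exists2 c : nat -> rat, (forall i, Zloc p (c i)) &
      (y = \sum_(i < r.+1) s (p%:R ^+ j * c i) (g i) /\ p%:R ^+ j * c 0%N = c0 0%N).
    move=> j; have [c hc hyc] := hy j; exists c => //; split => //.
    apply/eqP; rewrite -subr_eq0; apply/eqP; apply: hT.
      by apply: Zloc_sub => //; apply: Zloc_mul.
    exists (fun i => c0 i.+1 - p%:R ^+ j * c i.+1).
      by move=> i; apply: Zloc_sub => //; apply: Zloc_mul.
    rewrite sB //; last by apply: Zloc_mul.
    have e1 := hyc; have e2 := hy0.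
    rewrite big_ord_recl /= in e1; rewrite big_ord_recl /= expr0 mul1r in e2.
    have -> : s (p%:R ^+ j * c 0%N) (g 0%N) = y - \sum_(i < r) s (p%:R ^+ j * c (bump 0 i)) (g (bump 0 i)).
      by rewrite {1}e1 addrK.
    have -> : s (c0 0%N) (g 0%N) = y - \sum_(i < r) s (1 * c0 (bump 0 i)) (g (bump 0 i)).
      by rewrite {1}e2 addrK.
    rewrite opprB addrC addrA subrK -sumrB; apply: eq_bigr => i _.
    rewrite mul1r sB //; by apply: Zloc_mul.
  have tau0 : c0 0%N = 0.
    apply: (infdiv hp (hc0 0%N)) => j.
    have [c hc [_ he]] := hcj j; exists (c 0%N) => //.
  apply: (IH (fun i => g i.+1)) => j.
  have [c hc [hyc he]] := hcj j.
  exists (fun i => c i.+1) => //.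
  by rewrite hyc big_ord_recl /= he tau0 s0x add0r.
Qed.

End Kr.


Section Main.
Variables (p : nat) (q : int) (M : zmodType) (act : Aseq -> M -> M).
Hypotheses (hp : prime p) (hodd : odd p) (hq : coprimez q p).
Hypothesis hM : is_Amodule p q act.
Hypothesis hlfg : locally_fg p act.

Lemma inA_constA c : Zloc p c -> inA p (constA c).
Proof. by move=> hc k; rewrite /constA; case: ifP => _ //; exact: Zloc0. Qed.

Lemma inA_PhiA n : inA p (PhiA n).
Proof. move=> k; exact: Zloc_nat. Qed.

Lemma inA_PsiA lam : Zloc p lam -> inA p (PsiA q lam).
Proof.
move=> hl k; rewrite /PsiA; case: ifP => _.
  by apply: Zloc_sub => //; exact: Zloc_qi.
case: ifP => _; [exact: Zloc1 | exact: Zloc0].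
Qed.

Lemma inA_shiftR c lam : inA p c -> Zloc p lam -> inA p (shiftR q c lam).
Proof.
move=> hc hl k; rewrite /shiftR; apply: Zloc_add => //.
  by case: k => [|k] //; exact: Zloc0.
by apply: Zloc_mul => //; apply: Zloc_sub => //; exact: Zloc_qi.
Qed.

Lemma mulA_constlE c b : Defs.mulA q (constA c) b = fun k => c * b k.
Proof. by apply: functional_extensionality => k; rewrite mulA_constl. Qed.

Lemma mulA_PsiE a lam : Defs.mulA q a (PsiA q lam) = shiftR q a lam.
Proof. by apply: functional_extensionality => k; rewrite mulA_Psi. Qed.

Lemma PhiA_step n : Defs.mulA q (PhiA n) (PsiA q (qi q n.+1)) = PhiA n.+1.
Proof.
rewrite mulA_PsiE; apply: functional_extensionality => k.
rewrite /shiftR /PhiA; case: k => [|k].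
  rewrite add0r; case: n => [|n]; first by rewrite addrN mul0r.
  by rewrite mulr0.
case: (eqVneq k n) => [->|hkn].
  by rewrite eqxx (_ : (n.+1 == n) = false) ?mulr0 ?addr0 //; apply/eqP; lia.
rewrite eqSS (negbTE hkn) /= add0r.
case: (eqVneq k.+1 n) => [<-|_]; first by rewrite subrr mul0r.
by rewrite mulr0.
Qed.


Lemma act0 a : inA p a -> act a 0 = 0.
Proof.
case: hM => hadd _ _ _ ha.
have := hadd a ha 0 0; rewrite addr0 => h.
by apply: (@addrI _ (act a 0)); rewrite addr0 -h.
Qed.

Lemma constA_add c c' : Defs.addA (constA c) (constA c') = constA (c + c').
Proof. apply: functional_extensionality => k; rewrite /Defs.addA /constA; case: ifP => _ //; by rewrite addr0. Qed.

Lemma constA_mul c c' : Defs.mulA q (constA c) (constA c') = constA (c * c').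
Proof.
rewrite mulA_constlE; apply: functional_extensionality => k; rewrite /constA; case: ifP => _ //; by rewrite mulr0.
Qed.

Definition sc (c : rat) (y : M) := act (constA c) y.

Lemma sc_D c : Zloc p c -> forall x y, sc c (x + y) = sc c x + sc c y.
Proof. case: hM => hadd _ _ _ hc; apply: hadd; exact: inA_constA. Qed.

Lemma sc_Dl c c' : Zloc p c -> Zloc p c' -> forall x, sc (c + c') x = sc c x + sc c' x.
Proof. case: hM => _ hmadd _ _ hc hc' x; rewrite /sc -constA_add hmadd //; exact: inA_constA. Qed.

Lemma sc_M c c' : Zloc p c -> Zloc p c' -> forall x, sc c (sc c' x) = sc (c * c') x.
Proof. case: hM => _ _ hmul _ hc hc' x; rewrite /sc -constA_mul hmul //; exact: inA_constA. Qed.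

Lemma PhiA0 : PhiA 0 = constA 1.
Proof. by apply: functional_extensionality => k; rewrite /PhiA /constA; case: ifP. Qed.

Lemma main n : forall x, act (PhiA n) x = 0 -> forall a, inAfilt p n a -> act a x = 0.
Proof.
have [hadd hmadd hmul hone] := hM.
elim: n => [|n IH] x hx a [ha ha0].
  by move: hx; rewrite PhiA0 hone => ->; rewrite act0.
move: ha => ha; rename hx into hx0.
set lam := qi q n.+1.
have hlam : Zloc p lam by exact: Zloc_qi.
set x' := act (PsiA q lam) x.
have hx' : act (PhiA n) x' = 0.
  by rewrite /x' -hmul ?PhiA_step //; [exact: inA_PhiA | exact: inA_PsiA].
have [gens [_ hspan]] := hlfg x.
have Zpj j : Zloc p (p%:R ^+ j) by apply: Zloc_exp => //; exact: Zloc_nat.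
apply: (krull hp (s := sc) sc_D sc_Dl sc_M (r := size gens) (g := fun i => nth 0 gens i)) => j.
have [c [d [hc hd hb]]] := approx hp hodd hq (n := n) j ha ha0.
have inc : inA p c by case: hc.
have aE : a = Defs.addA (Defs.mulA q c (PsiA q lam)) (Defs.mulA q (constA (p%:R ^+ j)) d).
  by apply: functional_extensionality => k; rewrite /Defs.addA mulA_Psi mulA_constl; exact: hb.
have i1 : inA p (Defs.mulA q c (PsiA q lam)) by rewrite mulA_PsiE; exact: inA_shiftR.
have i2 : inA p (Defs.mulA q (constA (p%:R ^+ j)) d).
  by rewrite mulA_constlE => k; apply: Zloc_mul.
rewrite aE hmadd // hmul //; last exact: inA_PsiA.
rewrite -/x' (IH x' hx' c hc) add0r hmul //; last exact: inA_constA.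
have [e he ->] := hspan d hd.
exists e => //.
have := s_sum (s := sc) sc_D (c := p%:R ^+ j) (fun i : 'I_(size gens) => sc (e i) gens`_i) (Zpj j).
rewrite /sc => ->.
by apply: eq_bigr => i _; rewrite -/(sc _ _) -/(sc _ (sc _ _)) sc_M.
Qed.

Theorem corollary3p4' (x : M) (n : nat) (hx : act (PhiA n) x = 0) :
  forall a, inAfilt p n a -> act a x = 0.
Proof. exact: main. Qed.

End Main.

Theorem corollary3p4 (p : nat) (q : int) (M : zmodType) (act : Aseq -> M -> M)
  (hp : prime p) (hodd : odd p) (hq : primitive_mod_p2 p q)
  (hM : is_Amodule p q act) (hlfg : locally_fg p act)
  (x : M) (n : nat) (hx : act (PhiA n) x = 0) :
  forall a, inAfilt p n a -> act a x = 0.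
Proof.
case: hq => hq1 _.
exact: (main hp hodd hq1 hM hlfg hx).
Qed.
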